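(* Let $\alpha\in(0,1)$. For any distribution functions $F,G$ on $\mathbb R$, $$|\mathrm{VaR}_\alpha(F)-\mathrm{VaR}_\alpha(G)|\le\frac{2\|F\|+\|F-G\|}{\min\{\alpha,1-\alpha\}},$$ where $\|F\|=\max\{\|F\|_\infty,|\int_{-\infty}^0x\,dF(x)|,|\int_0^\infty x\,dF(x)|\}$.
   Context: $\|F\|_\infty=\sup_x|F(x)|$; integrals are Lebesgue–Stieltjes integrals (the norm may be $+\infty$, in which case the inequality is trivial). $\mathrm{VaR}_\alpha(F)=\inf\{y\in\mathbb R:F(y)\ge\alpha\}$. *)

(* Defs.v *)
From HB Require Import structures.
From mathcomp Require Import all_boot all_order all_algebra.
From mathcomp Require Import all_classical all_reals all_analysis.
Set Implicit Arguments. Unset Strict Implicit. Unset Printing Implicit Defensive.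
Import Order.TTheory GRing.Theory Num.Theory.
Import numFieldNormedType.Exports.
Local Open Scope classical_set_scope.
Local Open Scope ring_scope.
Local Open Scope ereal_scope.

Notation distribution_function R := (cumulativeBounded (0:R) (1:R)).

Definition VaR {R : realType} (alpha : R) (F : distribution_function R) : R :=
  inf [set y : R | (alpha <= F y)%R].

Definition LS_int_id {R : realType} (F : distribution_function R) (D : set R)
  : \bar R :=
  \int[lebesgue_stieltjes_measure F]_(x in (D : set (measurableTypeR R))) x%:E.

Definition sup_norm_diff {R : realType} (F G : R -> R) : \bar R :=
  ereal_sup (range (fun x => (`|F x - G x|)%:E)).

Definition dnorm {R : realType} (F : distribution_function R) : \bar R :=
  maxe (sup_norm_diff F (fun _ => 0%R))
    (maxe `|LS_int_id F `]-oo, 0%R]%classic| `|LS_int_id F `[0%R, +oo[%classic|).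

(* Integral of x over D against d(F - G): the difference of the two
   integrals when both are finite; +oo (the norm is infinite) otherwise. *)
Definition LS_int_id_diff {R : realType} (F G : distribution_function R)
  (D : set R) : \bar R :=
  if (LS_int_id F D \is a fin_num) && (LS_int_id G D \is a fin_num)
  then LS_int_id F D - LS_int_id G D else +oo.

Definition dnorm_diff {R : realType} (F G : distribution_function R) : \bar R :=
  maxe (sup_norm_diff F G)
    (maxe `|LS_int_id_diff F G `]-oo, 0%R]%classic| `|LS_int_id_diff F G `[0%R, +oo[%classic|).

(* Main.v *)
Set Warnings "-notation-overridden,-ambiguous-paths,-notation-incompatible-prefix".
Require Import Defs.
From HB Require Import structures.
From mathcomp Require Import all_boot all_order all_algebra.
From mathcomp Require Import all_classical all_reals all_analysis.
From mathcomp Require Import ring lra measurable_realfun.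
Import Order.TTheory GRing.Theory Num.Theory.
Local Open Scope ring_scope.
Local Open Scope ereal_scope.
Section VaRfacts.
Context {R : realType} (alpha : R) (halpha : (0 < alpha < 1)%R)
  (F : distribution_function R).

Let S := [set y : R | (alpha <= F y)%R]%classic.

Lemma S_nonempty : (S !=set0)%classic.
Proof.
have := cvgr_gt _ (cumulativey F) (alpha).
case/andP: halpha => _ a1 /(_ _ a1) [M [_ HM]].
exists (M + 1)%R; rewrite /S /=; apply: ltW; apply: HM; lra.
Qed.

Lemma S_lbound : exists M, forall y, S y -> (M <= y)%R.
Proof.
have := cvgr_lt _ (cumulativeNy F) (alpha).
case/andP: halpha => a0 _ /(_ _ a0) [M [_ HM]].
exists M => y Sy; rewrite leNgt; apply/negP => yM.
have := HM _ yM; rewrite /S /= in Sy; lra.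
Qed.

Lemma VaR_lt y : (y < VaR alpha F)%R -> (F y < alpha)%R.
Proof.
move=> yV; rewrite ltNge; apply/negP => ay.
have [M HM] := S_lbound.
have : (VaR alpha F <= y)%R.
  by apply: ge_inf => //; exists M => z; apply: HM.
lra.
Qed.

Lemma VaR_ge : (alpha <= F (VaR alpha F))%R.
Proof.
set a := VaR alpha F.
rewrite leNgt; apply/negP => Fa.
have := cvgr_lt _ (cumulative_is_right_continuous F a) _ Fa.
move=> [e /= e0 He].
have : (a + e / 2 <= a)%R.
  apply: (@lb_le_inf _ S) => [|z Sz]; first exact: S_nonempty.
  rewrite leNgt; apply/negP => za.
  have [za'|az] := ltP z a.
    by have := @VaR_lt z za'; rewrite /S /= in Sz; lra.
  have : (F z <= F (a + e/2))%R by apply: cumulative_is_nondecreasing; lra.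
  have : (F (a + e/2) < alpha)%R.
    apply: He; last lra.
    rewrite /ball_ /= (_ : a - (a + e / 2) = - (e / 2))%R; last by ring.
    rewrite normrN ger0_norm; lra.
  rewrite /S /= in Sz; lra.
lra.
Qed.

End VaRfacts.
Local Open Scope classical_set_scope.
Section IntLb.
Context {R : realType}.
Lemma int_lb d (T : measurableType d) (mu : measure T R) (D A : set T) (c : R) (g : T -> \bar R) :
  measurable D -> measurable A -> (0 <= c)%R ->
  (forall x, D x -> (0 <= g x)%E) -> measurable_fun D g ->
  (forall x, D x -> A x -> (c%:E <= g x)%E) ->
  (c%:E * mu (A `&` D) <= \int[mu]_(x in D) g x)%E.
Proof.
move=> mD mA c0 g0 mg cg.
rewrite -integral_indic // -(integralZl_indic _ (fun _ => A)) //; last first.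
  by move=> c0'; exfalso; lra.
apply: ge0_le_integral => //.
- by move=> x _; rewrite lee_fin mulr_ge0.
- by apply/measurable_EFinP; apply: measurable_funM => //; exact: measurable_indic.
move=> x Dx; rewrite indicE; case: (boolP (x \in A)) => [/set_mem Ax|_].
  by rewrite mulr1; apply: cg.
by rewrite mulr0; apply: g0.
Qed.

End IntLb.

Section Meas.
Context {R : realType} (F : distribution_function R).
Local Notation mu := (lebesgue_stieltjes_measure F).
Local Open Scope ring_scope.

Lemma mu_Nyc r : mu `]-oo, r] = (F r)%:E.
Proof.
rewrite itvNybndEbigcup.
have : mu `]-n%:R, r] @[n --> \oo] --> (F r)%:E.
  suff : ((F r)%:E - (F (-n%:R))%:E)%E @[n --> \oo] --> (F r)%:E.
    apply: cvg_trans; apply: near_eq_cvg; near=> n.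
    rewrite /lebesgue_stieltjes_measure /measure_extension/=.
    rewrite measurable_mu_extE/= ?wlength_itv_bnd//; last exact: is_ocitv.
    by rewrite lerNl; near: n; exact: nbhs_infty_ger.
  rewrite -[X in _ --> X](sube0 (F r)%:E); apply: (cvgeB _ (cvg_cst _ )) => //.
  apply: (cvg_comp _ _ (cvg_comp _ _ _ (cumulativeNy F))) => //.
  by apply: (cvg_comp _ _ cvgr_idn); rewrite ninfty.
have : mu `]- n%:R, r] @[n --> \oo] --> mu (\bigcup_n `]-n%:R, r]%classic).
  apply: nondecreasing_cvg_mu => //; first exact: bigcup_measurable.
  by move=> *; apply/subsetPset/subset_itv; rewrite leBSide//= lerN2 ler_nat.
exact: cvg_unique.
Unshelve. all: by end_near. Qed.

Lemma mu_oy r : (mu `]r, +oo[ = (1 - F r)%:E)%E.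
Proof.
rewrite -setCitvl probability_setC //.
have -> : (1 - F r)%:E = (1 - mu `]-oo, r])%E by rewrite mu_Nyc EFinB.
by [].
Qed.

Lemma mid : measurable_fun (setT : set (measurableTypeR R)) (fun x : measurableTypeR R => (x : R)).
Proof. exact: (@measurable_id _ _ setT). Qed.

End Meas.

Section Bounds.
Context {R : realType}.

Lemma sup_lemma (a k r : R) : (0 < k)%R ->
  (forall y, (0 <= y)%R -> (y < a)%R -> (y * k <= r)%R) -> (0 < a)%R -> (a * k <= r)%R.
Proof.
move=> k0 H a0.
have r0 : (0 <= r)%R by have := H 0%R (lexx _) a0; rewrite mul0r.
rewrite leNgt; apply/negP => rak.
set s := (r / k)%R.
have sk : (s * k = r)%R by rewrite /s divfK // gt_eqF.
have s0 : (0 <= s)%R by rewrite /s divr_ge0 // ltW.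
have sa : (s < a)%R by nra.
have hy : ((s + a) / 2 * k <= r)%R by apply: H; lra.
nra.
Qed.

End Bounds.

Section Main.
Context {R : realType} (alpha : R) (halpha : (0 < alpha < 1)%R)
  (F : distribution_function R).
Local Open Scope classical_set_scope.

Lemma mEFin (D : set (measurableTypeR R)) :
  measurable_fun D (fun x : measurableTypeR R => (x : R)%:E).
Proof. apply/measurable_EFinP; apply: measurable_funTS; exact: mid. Qed.

Lemma mEFinN (D : set (measurableTypeR R)) :
  measurable_fun D (fun x : measurableTypeR R => (- x : R)%R%:E).
Proof.
apply/measurable_EFinP; apply: measurable_funTS.
exact: (measurable_funN (@mid R)).
Qed.

Lemma pos_part_lb (y : R) : (0 <= y)%R ->
  ((y * (1 - F y))%:E <= LS_int_id F `[0%R, +oo[)%E.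
Proof.
move=> y0; rewrite /LS_int_id EFinM -mu_oy.
have -> : `]y, +oo[ = `]y, +oo[ `&` `[0%R, +oo[ :> set (measurableTypeR R).
  apply/esym/setIidl => x /=; rewrite !in_itv /= !andbT => yx; lra.
apply: int_lb => //.
- by move=> x /=; rewrite in_itv /= andbT lee_fin.
- by move=> x _ /=; rewrite in_itv /= andbT lee_fin => /ltW.
Qed.

Lemma neg_part_lb (y : R) : (y <= 0)%R ->
  ((- y * F y)%:E <= `| LS_int_id F `]-oo, 0%R] |)%E.
Proof.
move=> y0; rewrite /LS_int_id.
have -> : (\int[lebesgue_stieltjes_measure F]_(x in (`]-oo, 0%R] : set (measurableTypeR R))) x%:E
   = - \int[lebesgue_stieltjes_measure F]_(x in (`]-oo, 0%R] : set (measurableTypeR R))) (- x)%R%:E)%E.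
  rewrite -integral_ge0N; last first.
    by move=> x /=; rewrite in_itv /= lee_fin oppr_ge0.
  by apply: eq_integral => x _; rewrite EFinN oppeK.
rewrite abseN gee0_abs; last first.
  by apply: integral_ge0 => x /=; rewrite in_itv /= lee_fin oppr_ge0.
rewrite EFinM -mu_Nyc.
have -> : `]-oo, y] = `]-oo, y] `&` `]-oo, 0%R] :> set (measurableTypeR R).
  apply/esym/setIidl => x /=; rewrite !in_itv /= => yx; lra.
apply: int_lb => //.
- by rewrite oppr_ge0.
- by move=> x /=; rewrite in_itv /= lee_fin oppr_ge0.
- exact: mEFinN.
- by move=> x _ /=; rewrite in_itv /= lee_fin => ?; lra.
Qed.

Local Open Scope ring_scope.
Lemma VaR_bound :
  ((`|VaR alpha F| * Num.min alpha (1 - alpha))%:E <=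
    maxe `| LS_int_id F `]-oo, 0%R] | `| LS_int_id F `[0%R, +oo[ |)%E.
Proof.
have [a1 a2] : (0 < alpha)%R /\ (alpha < 1)%R by apply/andP.
have m1 : (Num.min alpha (1 - alpha)%R <= alpha)%R by rewrite ge_min lexx.
have m2 : (Num.min alpha (1 - alpha)%R <= 1 - alpha)%R by rewrite ge_min lexx orbT.
have m0 : (0 < Num.min alpha (1 - alpha)%R)%R by rewrite lt_min a1 subr_gt0 a2.
set m := Num.min alpha (1 - alpha) in m0 m1 m2 *.
set a := VaR alpha F.
have [a0|a0] := leP a 0%R.
  rewrite ler0_norm //.
  apply: le_trans (_ : (- a * F a)%:E <= _)%E; last first.
    by rewrite le_max (@neg_part_lb a a0).
  rewrite lee_fin.
  have := @VaR_ge R alpha halpha F; rewrite -/a => h.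
  nra.
rewrite gtr0_norm //.
apply: le_trans (_ : (a * (1 - alpha))%:E <= _)%E; first by rewrite lee_fin; nra.
apply: le_trans (_ : LS_int_id F `[0%R, +oo[ <= _)%E; last first.
  by rewrite le_max lee_abs orbT.
have H : forall y, (0 <= y)%R -> (y < a)%R ->
    ((y * (1 - alpha))%:E <= LS_int_id F `[0%R, +oo[)%E.
  move=> y y0 ya; apply: le_trans (@pos_part_lb y y0).
  have := @VaR_lt R alpha halpha F y ya; rewrite lee_fin => h; nra.
move: H; case: (LS_int_id F `[0%R, +oo[) => [r| |] H.
- rewrite lee_fin; apply: sup_lemma; [lra| |exact: a0].
  by move=> y y0 ya; rewrite -lee_fin; apply: H.
- exact: leey.
- by have := H 0%R (lexx _) a0; rewrite mul0r.
Qed.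

End Main.

Section Final.
Context {R : realType}.
Local Open Scope classical_set_scope.

Lemma two_mul (x : \bar R) : (0 <= x)%E -> (2%:E * x = x + x)%E.
Proof.
case: x => [r| |] // r0.
  by rewrite -EFinM -EFinD; congr EFin; ring.
by rewrite mulry gtr0_sg // mul1e addey.
Qed.

Lemma abs_G_le (F G : distribution_function R) D :
  (`|LS_int_id G D| <= `|LS_int_id F D| + `|LS_int_id_diff F G D|)%E.
Proof.
rewrite /LS_int_id_diff; case: ifP => [/andP [fF fG]| _].
  move: fF fG; case: (LS_int_id F D) => // r _; case: (LS_int_id G D) => // s _.
  rewrite /= -EFinD lee_fin.
  have := ler_normB r (r - s)%R; rewrite (_ : (r - (r - s) = s)%R) //; ring.
by rewrite /= addey ?leey // gt_eqF // (lt_le_trans _ (abse_ge0 _)) // ltNy0.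
Qed.

End Final.

Theorem lemma30 (R : realType) (alpha : R)
  (halpha : (0 < alpha < 1)%R) (F G : distribution_function R) :
  (`| VaR alpha F - VaR alpha G |)%:E <=
    (2%:E * dnorm F + dnorm_diff F G) * ((Num.min alpha (1 - alpha))^-1)%:E.
Proof.
have [a1 a2] : (0 < alpha)%R /\ (alpha < 1)%R by apply/andP.
have m0 : (0 < Num.min alpha (1 - alpha))%R by rewrite lt_min a1 subr_gt0 a2.
have hA := @VaR_bound R alpha halpha F.
have hB := @VaR_bound R alpha halpha G.
set m := Num.min alpha (1 - alpha)%R in m0 hA hB *.
set a := VaR alpha F in hA *.
set b := VaR alpha G in hB *.
set NF := maxe `| LS_int_id F `]-oo, 0%R] | `| LS_int_id F `[0%R, +oo[ | in hA.
have NFd : NF <= dnorm F by rewrite /dnorm le_max lexx orbT.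
have ND : maxe `| LS_int_id G `]-oo, 0%R] | `| LS_int_id G `[0%R, +oo[ |
   <= NF + maxe `|LS_int_id_diff F G `]-oo, 0%R]| `|LS_int_id_diff F G `[0%R, +oo[|.
  rewrite ge_max; apply/andP; split; apply: le_trans (abs_G_le F G _) _;
    by apply: leeD; rewrite le_max lexx ?orbT.
have NDd : maxe `|LS_int_id_diff F G `]-oo, 0%R]| `|LS_int_id_diff F G `[0%R, +oo[|
   <= dnorm_diff F G by rewrite /dnorm_diff le_max lexx orbT.
have NF0 : 0 <= NF by rewrite le_max abse_ge0.
have key : (`|a - b| * m)%:E <= 2%:E * dnorm F + dnorm_diff F G.
  rewrite two_mul; last exact: le_trans NF0 NFd.
  apply: le_trans (_ : (`|a| * m)%:E + (`|b| * m)%:E <= _).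
    rewrite -EFinD lee_fin -mulrDl ler_pM2r //.
    exact: ler_normB.
  rewrite -addeA; apply: leeD; first exact: le_trans hA NFd.
  apply: le_trans hB _; apply: le_trans ND _.
  by apply: leeD.
have -> : (`|a - b|)%:E = (`|a - b| * m)%:E * (m^-1)%:E.
  by rewrite -EFinM mulrK // unitfE gt_eqF.
by apply: lee_wpmul2r => //; rewrite lee_fin invr_ge0 ltW.
Qed.
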